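(* Let $Q$ be an admissible orientation of $\tilde A_n$ with exactly one source $x$ and one sink $y$, and let $\omega,\upsilon$ be the two different maximal paths of $Q$ (both from $x$ to $y$). Let $a\in\Bbbk\setminus\{0\}$. Then for every indecomposable two-sided ideal $I$ of $\Bbbk Q$, \[(\omega+a\upsilon)\cdot I\cong\begin{cases}(\omega+a\upsilon),&\varepsilon_x\in I,\\0,&\text{otherwise},\end{cases}\qquad I\cdot(\omega+a\upsilon)\cong\begin{cases}(\omega+a\upsilon),&\varepsilon_y\in I,\\0,&\text{otherwise}.\end{cases}\] In particular, $(\omega+a\upsilon)\cdot(\omega+b\upsilon)=0$ for every $b\in\Bbbk\setminus\{0\}$.
   Context: $\Bbbk$ is an algebraically closed field. An admissible orientation of $\tilde A_n$ is a finite quiver with $n$ vertices whose underlying undirected graph is a cycle, having no oriented cycle and at least one source. Paths include trivial paths $\varepsilon_z$; products of paths are concatenations when defined and $0$ otherwise. Maximal paths are paths not properly contained as subpaths of other paths. $(\omega+a\upsilon)$ denotes the ideal $\Bbbk(\omega+a\upsilon)$ generated by $\omega+a\upsilon$. An ideal is indecomposable if non-zero and not a direct sum of two non-zero ideals. *)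

(* Defs.v *)
From HB Require Import structures.
From mathcomp Require Import all_boot all_order all_algebra.
Set Implicit Arguments. Unset Strict Implicit. Unset Printing Implicit Defensive.
Import GRing.Theory.
Local Open Scope ring_scope.

(* A finite quiver is given by a vertex finType V, an arrow finType E and
   source / target maps s t : E -> V.
   A path is a pair (v, [:: e1; ...; em]) : V * seq E : it starts at v and
   traverses e1, then e2, ..., then em. *)
Definition qpath (V E : finType) := (V * seq E)%type.

Definition is_path (V E : finType) (s t : E -> V) (p : qpath V E) : bool :=
  match p.2 with
  | [::] => true
  | e :: es => (s e == p.1) && path (fun e1 e2 => t e1 == s e2) e es
  end.

Definition ptgt (V E : finType) (t : E -> V) (p : qpath V E) : V :=
  last p.1 (map t p.2).

Definition eps (V E : finType) (z : V) : qpath V E := (z, [::]).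

Definition subpath (V E : finType) (s t : E -> V) (q p : qpath V E) : Prop :=
  exists p1 p2 : qpath V E,
    [/\ is_path s t p1, is_path s t p2, is_path s t q &
        [/\ ptgt t p1 = q.1, ptgt t q = p2.1 & p = (p1.1, p1.2 ++ q.2 ++ p2.2)]].

Definition maximal_path (V E : finType) (s t : E -> V) (p : qpath V E) : Prop :=
  is_path s t p /\ forall q, is_path s t q -> subpath s t p q -> q = p.

Definition is_source (V E : finType) (t : E -> V) (x : V) : Prop :=
  forall e, t e <> x.
Definition is_sink (V E : finType) (s : E -> V) (y : V) : Prop :=
  forall e, s e <> y.

Definition underlying_cycle (n : nat) (V E : finType) (s t : E -> V) : Prop :=
  exists (f : 'I_n -> V) (g : 'I_n -> E),
    [/\ bijective f, bijective g &
        forall i, (s (g i) = f i /\ t (g i) = f (ordS i))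
               \/ (s (g i) = f (ordS i) /\ t (g i) = f i)].

Definition no_oriented_cycle (V E : finType) (s t : E -> V) : Prop :=
  forall p : qpath V E, is_path s t p -> (0 < size p.2)%N -> ptgt t p <> p.1.

Definition admissible_An (n : nat) (V E : finType) (s t : E -> V) : Prop :=
  [/\ underlying_cycle n s t, no_oriented_cycle s t & exists x, is_source t x].

(* Elements of the path algebra kQ: k-valued functions on (candidate) paths,
   finitely supported on genuine paths (coefficient of each path). *)
Definition KQ (k : fieldType) (V E : finType) := qpath V E -> k.

Definition in_kQ (k : fieldType) (V E : finType) (s t : E -> V) (f : KQ k V E) : Prop :=
  (forall p, f p != 0 -> is_path s t p) /\
  exists l : seq (qpath V E), forall p, f p != 0 -> p \in l.

Definition delta (k : fieldType) (V E : finType) (p : qpath V E) : KQ k V E :=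
  fun q => if q == p then 1 else 0.

(* multiplication: (f * g) (p) = sum over factorizations p = p2 . p1
   (p1 traversed first) of f p2 * g p1. *)
Definition kQmul (k : fieldType) (V E : finType) (t : E -> V) (f g : KQ k V E)
  : KQ k V E :=
  fun p => \sum_(i < (size p.2).+1)
             f (ptgt t (p.1, take i p.2), drop i p.2) * g (p.1, take i p.2).

Definition is_ideal (k : fieldType) (V E : finType) (s t : E -> V)
  (I : KQ k V E -> Prop) : Prop :=
  [/\ forall f, I f -> in_kQ s t f,
      I (fun _ => 0),
      forall f g, I f -> I g -> I (fun p => f p + g p),
      forall c f, I f -> I (fun p => c * f p) &
      forall f g, in_kQ s t f -> I g -> I (kQmul t f g) /\ I (kQmul t g f)].

Definition nonzero_ideal (k : fieldType) (V E : finType) (I : KQ k V E -> Prop) : Prop :=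
  exists f, I f /\ exists p, f p != 0.

Definition zero_ideal (k : fieldType) (V E : finType) : KQ k V E -> Prop :=
  fun f => f = (fun _ => 0).

Definition indecomposable_ideal (k : fieldType) (V E : finType) (s t : E -> V)
  (I : KQ k V E -> Prop) : Prop :=
  is_ideal s t I /\ nonzero_ideal I /\
  ~ exists J K : KQ k V E -> Prop,
      [/\ is_ideal s t J, is_ideal s t K, nonzero_ideal J, nonzero_ideal K &
        [/\ (forall f, J f -> K f -> f = (fun _ => 0)) &
          forall f, I f <-> exists g h, [/\ J g, K h & f = (fun p => g p + h p)]]].

Definition ideal_prod (k : fieldType) (V E : finType) (t : E -> V)
  (J I : KQ k V E -> Prop) : KQ k V E -> Prop :=
  fun f => exists m (F G : 'I_m -> KQ k V E),
    (forall i, J (F i) /\ I (G i)) /\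
    f = (fun p => \sum_(i < m) kQmul t (F i) (G i) p).

Definition gen_ideal (k : fieldType) (V E : finType) (s t : E -> V)
  (u : KQ k V E) : KQ k V E -> Prop :=
  fun f => exists m (F G : 'I_m -> KQ k V E),
    (forall i, in_kQ s t (F i) /\ in_kQ s t (G i)) /\
    f = (fun p => \sum_(i < m) kQmul t (kQmul t (F i) u) (G i) p).

Definition same_ideal (k : fieldType) (V E : finType) (I J : KQ k V E -> Prop) : Prop :=
  forall f, I f <-> J f.

Definition if_in_else (k : fieldType) (V E : finType) (P : Prop)
  (J1 J2 : KQ k V E -> Prop) : KQ k V E -> Prop :=
  fun f => (P /\ J1 f) \/ (~ P /\ J2 f).

(* Main.v *)
Require Import Defs.
From mathcomp Require Import all_boot all_order all_algebra.
From Stdlib Require Import FunctionalExtensionality Classical.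
Import GRing.Theory.
Local Open Scope ring_scope.

Lemma ptgt_nonnil (V E : finType) (t : E -> V) v (es : seq E) :
  es != [::] -> exists e, ptgt t (v, es) = t e.
Proof.
case/lastP: es => // r e _; exists e.
by rewrite /ptgt /= map_rcons last_rcons.
Qed.

Lemma mulLx (k : fieldType) (V E : finType) (t : E -> V) (x : V) (f g : KQ k V E) :
  (forall e, t e <> x) -> (forall q, f q != 0 -> q.1 = x) ->
  kQmul t f g = fun p => f p * g (eps E x).
Proof.
move=> src hf; apply: functional_extensionality => -[v es].
rewrite /kQmul /= big_ord_recl /= take0 drop0.
rewrite big1 ?addr0.
- have [->|nz] := eqVneq (f (v, es)) 0; first by rewrite !mul0r.
  by have /= -> := hf _ nz.
- move=> i _.
  have [e He] : exists e, ptgt t (v, take (bump 0 i) es) = t e.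
    apply: ptgt_nonnil; rewrite -size_eq0 size_take.
    case: i => i hi /=; rewrite /bump /=.
    by case: ifP => // _; rewrite -lt0n (leq_ltn_trans _ hi).
  have -> : f (ptgt t (v, take (bump 0 i) es), drop (bump 0 i) es) = 0.
    apply/eqP; apply: contraT => nz.
    by have := hf _ nz; rewrite /= He => /src.
  by rewrite mul0r.
Qed.

Lemma mulLy (k : fieldType) (V E : finType) (s t : E -> V) (y : V) (g f : KQ k V E) :
  (forall e, s e <> y) -> (forall q, g q != 0 -> is_path s t q) ->
  (forall q, f q != 0 -> ptgt t q = y) ->
  kQmul t g f = fun p => g (eps E y) * f p.
Proof.
move=> snk hg hf; apply: functional_extensionality => -[v es].
rewrite /kQmul /= big_ord_recr /= take_size drop_size.
rewrite big1 ?add0r.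
- have [->|nz] := eqVneq (f (v, es)) 0; first by rewrite !mulr0.
  by have /= -> := hf _ nz.
- move=> i _.
  have [->|nz] := eqVneq (f (v, take i es)) 0; first by rewrite mulr0.
  have Hy := hf _ nz.
  have : drop i es != [::].
    by rewrite -size_eq0 size_drop subn_eq0 -ltnNge ltn_ord.
  case Hd: (drop i es) => [|e r] // _.
  have -> : g (ptgt t (v, take i es), e :: r) = 0.
    apply/eqP; apply: contraT => nz2.
    have := hg _ nz2; rewrite /is_path /= Hy => /andP [/eqP /snk].
    done.
  by rewrite mul0r.
Qed.

Lemma in_kQ_sd (k : fieldType) (V E : finType) (s t : E -> V) (z : V) (c : k) :
  in_kQ s t (fun q => c * delta k (eps E z) q).
Proof.
split.
- move=> p; rewrite /delta /=; case: (p =P eps E z) => [-> _ //|_]; by rewrite mulr0 eqxx.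
- exists [:: eps E z] => p; rewrite /delta /=; case: (p =P eps E z) => [-> _|_].
  + by rewrite mem_seq1.
  + by rewrite mulr0 eqxx.
Qed.

Lemma in_kQ_d (k : fieldType) (V E : finType) (s t : E -> V) (z : V) :
  in_kQ s t (delta k (eps E z)).
Proof.
have := @in_kQ_sd k V E s t z 1.
rewrite (_ : (fun q => 1 * delta k (eps E z) q) = delta k (eps E z)) //.
by apply: functional_extensionality => q; rewrite mul1r.
Qed.

Lemma delta_supp (k : fieldType) (V E : finType) (w : qpath V E) q :
  delta k w q != 0 -> q = w.
Proof. by rewrite /delta; case: (q =P w) => // _; rewrite eqxx. Qed.

Lemma w_supp (k : fieldType) (V E : finType) (w v : qpath V E) (c : k) q :
  (fun p => delta k w p + c * delta k v p) q != 0 -> q = w \/ q = v.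
Proof.
rewrite /delta /=; case: (q =P w) => [-> _|_]; first by left.
case: (q =P v) => [-> _|_]; first by right.
by rewrite mulr0 addr0 eqxx.
Qed.

Set Implicit Arguments.
Section Gen.
Variables (k : fieldType) (V E : finType) (s t : E -> V) (x y : V).
Hypothesis src : forall e, t e <> x.
Hypothesis snk : forall e, s e <> y.

Lemma gen_char (w : KQ k V E) f :
  (forall q, w q != 0 -> q.1 = x) -> (forall q, w q != 0 -> ptgt t q = y) ->
  gen_ideal s t w f -> exists c, f = fun p => c * w p.
Proof.
move=> hx hy [m [F [G [HFG ->]]]].
exists (\sum_(i < m) F i (eps E y) * G i (eps E x)).
apply: functional_extensionality => p; rewrite mulr_suml; apply: eq_bigr => i _.
have [[HF _] _] := HFG i.
rewrite (@mulLy _ _ _ _ _ y _ _ snk HF hy).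
rewrite (@mulLx _ _ _ _ x _ _ src); last first.
  by move=> q nz; apply: hx; apply: contraNneq nz => /= ->; rewrite mulr0.
by rewrite mulrAC.
Qed.

Lemma gen_intro (w : KQ k V E) c :
  (forall q, w q != 0 -> q.1 = x) -> (forall q, w q != 0 -> ptgt t q = y) ->
  gen_ideal s t w (fun p => c * w p).
Proof.
move=> hx hy.
exists 1%N, (fun _ => fun q => c * delta k (eps E y) q),
  (fun _ => delta k (eps E x)).
split; first by move=> _; split; [apply: in_kQ_sd | apply: in_kQ_d].
apply: functional_extensionality => p; rewrite big_ord1.
rewrite (@mulLy _ _ _ _ _ y (fun q => c * delta k (eps E y) q) w snk); last 2 first.
- by move=> q; case: (@in_kQ_sd k V E s t y c) => H _; apply: H.
- exact: hy.
rewrite (@mulLx _ _ _ _ x _ _ src); last first.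
  by move=> q nz; apply: hx; apply: contraNneq nz => /= ->; rewrite mulr0.
by rewrite /delta /= !eqxx mulr1 mulr1.
Qed.

Lemma ideal_x (I : KQ k V E -> Prop) G :
  is_ideal s t I -> I G -> G (eps E x) != 0 -> I (delta k (eps E x)).
Proof.
move=> [_ _ _ Hsc Hmul] HG nz.
have [H1 _] := Hmul _ _ (@in_kQ_d k V E s t x) HG.
rewrite (@mulLx _ _ _ _ x _ _ src) in H1; last by move=> q /delta_supp ->.
have := Hsc (G (eps E x))^-1 _ H1.
rewrite (_ : (fun p => _ * (_ * _)) = delta k (eps E x)) //.
by apply: functional_extensionality => p; rewrite mulrCA mulVf // mulr1.
Qed.

Lemma ideal_y (I : KQ k V E -> Prop) G :
  is_ideal s t I -> I G -> G (eps E y) != 0 -> I (delta k (eps E y)).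
Proof.
move=> [Hin _ _ Hsc Hmul] HG nz.
have [_ H1] := Hmul _ _ (@in_kQ_d k V E s t y) HG.
rewrite (@mulLy _ _ _ _ _ y _ _ snk) in H1; last 2 first.
- by move=> q; case: (Hin _ HG) => H _; apply: H.
- by move=> q /delta_supp ->.
have := Hsc (G (eps E y))^-1 _ H1.
rewrite (_ : (fun p => _ * (_ * _)) = delta k (eps E y)) //.
by apply: functional_extensionality => p; rewrite mulKf.
Qed.

End Gen.

Theorem lemma23 (k : closedFieldType) (n : nat) (V E : finType) (s t : E -> V)
  (x y : V) (omega upsilon : qpath V E) (a : k) :
  admissible_An n s t ->
  is_source t x -> (forall z, is_source t z -> z = x) ->
  is_sink s y -> (forall z, is_sink s z -> z = y) ->
  maximal_path s t omega -> maximal_path s t upsilon -> omega <> upsilon ->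
  (forall p, maximal_path s t p -> p = omega \/ p = upsilon) ->
  omega.1 = x -> ptgt t omega = y -> upsilon.1 = x -> ptgt t upsilon = y ->
  a != 0 ->
  let u := fun p => delta k omega p + a * delta k upsilon p in
  (forall I : KQ k V E -> Prop, indecomposable_ideal s t I ->
     same_ideal (ideal_prod t (gen_ideal s t u) I)
       (if_in_else (I (delta k (eps E x))) (gen_ideal s t u) (@zero_ideal k V E))
     /\
     same_ideal (ideal_prod t I (gen_ideal s t u))
       (if_in_else (I (delta k (eps E y))) (gen_ideal s t u) (@zero_ideal k V E)))
  /\
  (forall b : k, b != 0 ->
     same_ideal (ideal_prod t (gen_ideal s t u)
                   (gen_ideal s t (fun p => delta k omega p + b * delta k upsilon p)))
       (@zero_ideal k V E)).
Proof.
move=> _ src _ snk _ _ _ neq _ o1 ot u1 ut _ u.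
have hx : forall c q, (fun p => delta k omega p + c * delta k upsilon p) q != 0 -> q.1 = x.
  by move=> c q /w_supp [->|->].
have hy : forall c q, (fun p => delta k omega p + c * delta k upsilon p) q != 0 ->
    ptgt t q = y.
  by move=> c q /w_supp [->|->].
have wom : forall c : k, (fun p => delta k omega p + c * delta k upsilon p) omega = 1.
  move=> c /=; rewrite /delta eqxx; case: eqP => [H|_]; first by case: neq.
  by rewrite mulr0 addr0.
have ntx : forall (p : qpath V E), p.1 = x -> ptgt t p = y -> p <> omega -> p <> upsilon ->
   False -> True by [].
have neps : forall c : k, (fun p => delta k omega p + c * delta k upsilon p) (eps E x) = 0.
  move=> c /=.
  have NT : forall (p q : qpath V E), p <> q -> p.1 = x -> ptgt t p = y ->
      q.1 = x -> ptgt t q = y -> eps E x <> p.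
    move=> p q pq p1 pt q1 qt ep.
    have xy : x = y by rewrite -pt -ep.
    case: q pq q1 qt => v [|e r] pq /= q1 qt.
      by apply: pq; rewrite -ep -q1.
    have [e' He] : exists e', ptgt t (v, e :: r) = t e' by apply: ptgt_nonnil.
    by apply: (src e'); rewrite -He qt xy.
  rewrite /delta; case: eqP => [H|_]; first by case: (NT _ _ neq o1 ot u1 ut).
  case: eqP => [H|_]; last by rewrite mulr0 addr0.
  by case: (NT upsilon omega (fun h => neq (esym h)) u1 ut o1 ot).
have form : forall (c : k) f, gen_ideal s t (fun p => delta k omega p + c * delta k upsilon p) f ->
   f = fun p => f omega * (fun p => delta k omega p + c * delta k upsilon p) p.
  move=> c f Hf; have [d Hd] := gen_char src snk (hx c) (hy c) Hf.
  by rewrite {2}Hd /= (wom c) mulr1.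
split.
- move=> I [HI _]; split.
  + move=> f; split.
    * case=> m [F [G [HFG ->]]].
      have Hsum : (fun p => \sum_(i < m) kQmul t (F i) (G i) p) =
          fun p => (\sum_(i < m) F i omega * G i (eps E x)) * u p.
        apply: functional_extensionality => p; rewrite mulr_suml; apply: eq_bigr => i _.
        have [HF _] := HFG i.
        rewrite {1}(form _ _ HF) (@mulLx _ _ _ _ x _ _ src); last first.
          by move=> q nz; apply: (hx a); apply: contraNneq nz => /= ->; rewrite mulr0.
        by rewrite mulrAC.
      rewrite Hsum.
      case: (classic (I (delta k (eps E x)))) => HIx.
        rewrite /if_in_else; left; split => //; exact: (gen_intro s t src snk u _ (hx a) (hy a)).
      rewrite /if_in_else; right; split => //; rewrite /zero_ideal.
      apply: functional_extensionality => p.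
      rewrite big1 ?mul0r // => i _.
      have [_ HG] := HFG i.
      have [->|nz] := eqVneq (G i (eps E x)) 0; first by rewrite mulr0.
      by case: HIx; exact: (ideal_x src _ HI HG nz).
    * case=> [[HIx Hg] | [HnIx ->]].
        exists 1%N, (fun _ => f), (fun _ => delta k (eps E x)); split => //.
        apply: functional_extensionality => p; rewrite big_ord1.
        rewrite (@mulLx _ _ _ _ x _ _ src); last first.
          move=> q nz; apply: (hx a); rewrite (form _ _ Hg) in nz.
          by apply: contraNneq nz => /= ->; rewrite mulr0.
        by rewrite /delta /= eqxx mulr1.
      exists 0%N, (fun _ _ => 0), (fun _ _ => 0); split; first by case.
      by apply: functional_extensionality => p; rewrite big_ord0.
  + move=> f; split.
    * case=> m [G [F [HFG ->]]].
      have Hsum : (fun p => \sum_(i < m) kQmul t (G i) (F i) p) =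
          fun p => (\sum_(i < m) G i (eps E y) * F i omega) * u p.
        apply: functional_extensionality => p; rewrite mulr_suml; apply: eq_bigr => i _.
        have [HG HF] := HFG i.
        have [Hin _ _ _ _] := HI.
        rewrite {1}(form _ _ HF) (@mulLy _ _ _ _ _ y _ _ snk); last 2 first.
        - by move=> q; case: (Hin _ HG) => H _; apply: H.
        - by move=> q nz; apply: (hy a); apply: contraNneq nz => /= ->; rewrite mulr0.
        by rewrite mulrA.
      rewrite Hsum.
      case: (classic (I (delta k (eps E y)))) => HIy.
        rewrite /if_in_else; left; split => //; exact: (gen_intro s t src snk u _ (hx a) (hy a)).
      rewrite /if_in_else; right; split => //; rewrite /zero_ideal.
      apply: functional_extensionality => p.
      rewrite big1 ?mul0r // => i _.
      have [HG _] := HFG i.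
      have [->|nz] := eqVneq (G i (eps E y)) 0; first by rewrite mul0r.
      by case: HIy; exact: (ideal_y snk _ HI HG nz).
    * case=> [[HIy Hg] | [HnIy ->]].
        exists 1%N, (fun _ => delta k (eps E y)), (fun _ => f); split => //.
        apply: functional_extensionality => p; rewrite big_ord1.
        rewrite (@mulLy _ _ _ _ _ y _ _ snk); last 2 first.
        - by move=> q /delta_supp ->.
        - move=> q nz; apply: (hy a); rewrite (form _ _ Hg) in nz.
          by apply: contraNneq nz => /= ->; rewrite mulr0.
        by rewrite /delta /= eqxx mul1r.
      exists 0%N, (fun _ _ => 0), (fun _ _ => 0); split; first by case.
      by apply: functional_extensionality => p; rewrite big_ord0.
- move=> b _ f; split.
  + case=> m [F [G [HFG ->]]]; rewrite /zero_ideal.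
    apply: functional_extensionality => p; apply: big1 => i _.
    have [HF HG] := HFG i.
    rewrite {1}(form _ _ HF) (@mulLx _ _ _ _ x _ _ src); last first.
      by move=> q nz; apply: (hx a); apply: contraNneq nz => /= ->; rewrite mulr0.
    by rewrite (form _ _ HG) /= neps mulr0 mulr0.
  + rewrite /zero_ideal => ->.
    exists 0%N, (fun _ _ => 0), (fun _ _ => 0); split; first by case.
    by apply: functional_extensionality => p; rewrite big_ord0.
Qed.
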